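(* The cut rule is admissible in ${\sf GWF^s_{N_2}}$: for all $D,Z\in{\sf Frm_2}$ and finite multisets $\Gamma,\Gamma'$ of ${\sf Frm_2}$-formulas, if $\Gamma\Rightarrow D$ and $D,\Gamma'\Rightarrow Z$ are derivable in ${\sf GWF^s_{N_2}}$, then $\Gamma,\Gamma'\Rightarrow Z$ is derivable in ${\sf GWF^s_{N_2}}$.
   Context: Language: countably many atoms $p,q,\dots$, the constant $\bot$, and binary connectives $\wedge,\vee,\rightarrow$ ($\rightarrow$ is strict implication). ${\sf Frm}$ is the set of formulas built from atoms and $\bot$ with $\wedge,\vee,\rightarrow$; $A,B,C,D$ range over ${\sf Frm}$. Let $\supset$ be a new binary symbol (material implication) and ${\sf Frm_1}={\sf Frm}\cup\{A\supset B : A,B\in{\sf Frm}\}$ (no nesting of $\supset$). ${\sf Frm_2}$ is the smallest set containing ${\sf Frm_1}$ and closed under $\wedge$ and $\vee$; $X,Y,Z$ range over ${\sf Frm_2}$. A single-succedent sequent is $\Gamma\Rightarrow Z$ with $\Gamma$ a finite multiset of ${\sf Frm_2}$-formulas and $Z\in{\sf Frm_2}$. The calculus ${\sf GWF^s_{N_2}}$ has initial sequents $(id^s)$ $p,\Gamma\Rightarrow p$ ($p$ an atom) and $(L^s_\bot)$ $\bot,\Gamma\Rightarrow Z$, and rules (premises / conclusion): $(L^s_\wedge)$ $X,Y,\Gamma\Rightarrow Z$ / $X\wedge Y,\Gamma\Rightarrow Z$; $(R^s_\wedge)$ $\Gamma\Rightarrow X$ and $\Gamma\Rightarrow Y$ /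 $\Gamma\Rightarrow X\wedge Y$; $(L^s_\vee)$ $X,\Gamma\Rightarrow Z$ and $Y,\Gamma\Rightarrow Z$ / $X\vee Y,\Gamma\Rightarrow Z$; $(R^s_{\vee_l})$ $\Gamma\Rightarrow X$ / $\Gamma\Rightarrow X\vee Y$; $(R^s_{\vee_r})$ $\Gamma\Rightarrow Y$ / $\Gamma\Rightarrow X\vee Y$; $(L^s_\supset)$ $A\supset B,\Gamma\Rightarrow A$ and $B,\Gamma\Rightarrow Z$ / $A\supset B,\Gamma\Rightarrow Z$; $(R^s_\supset)$ $A,\Gamma\Rightarrow B$ / $\Gamma\Rightarrow A\supset B$; $(LR^s_\rightarrow)$ $C\supset D,A\Rightarrow B$ / $\Gamma,C\rightarrow D\Rightarrow A\rightarrow B$; $(R^s_\rightarrow)$ $A\Rightarrow B$ / $\Gamma\Rightarrow A\rightarrow B$. Here $A,B,C,D\in{\sf Frm}$, $X,Y,Z\in{\sf Frm_2}$, $\Gamma$ an arbitrary finite multiset of ${\sf Frm_2}$-formulas. *)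

(* Defs.v *)
From Stdlib Require Import List Permutation.
Import ListNotations.

(* Frm: atoms, bot, /\, \/, strict implication -> *)
Inductive frm : Type :=
| FAtom : nat -> frm
| FBot : frm
| FAnd : frm -> frm -> frm
| FOr : frm -> frm -> frm
| FImp : frm -> frm -> frm.

(* Frm_2, represented canonically: Frm_2 is generated from Frm_1 = Frm u {A ⊃ B}
   by /\ and \/. *)
Inductive frm2 : Type :=
| Atom : nat -> frm2
| Bot : frm2
| SImp : frm -> frm -> frm2
| MImp : frm -> frm -> frm2
| And2 : frm2 -> frm2 -> frm2
| Or2 : frm2 -> frm2 -> frm2.

Fixpoint emb (A : frm) : frm2 :=
  match A with
  | FAtom p => Atom p
  | FBot => Bot
  | FAnd A B => And2 (emb A) (emb B)
  | FOr A B => Or2 (emb A) (emb B)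
  | FImp A B => SImp A B
  end.

(* Antecedents are finite multisets, represented as lists up to permutation:
   each rule's conclusion may be any permutation of the displayed antecedent. *)
Inductive der : list frm2 -> frm2 -> Prop :=
| d_id : forall p G D, Permutation D (Atom p :: G) -> der D (Atom p)
| d_Lbot : forall G D Z, Permutation D (Bot :: G) -> der D Z
| d_Land : forall X Y G D Z, Permutation D (And2 X Y :: G) ->
    der (X :: Y :: G) Z -> der D Z
| d_Rand : forall G X Y, der G X -> der G Y -> der G (And2 X Y)
| d_Lor : forall X Y G D Z, Permutation D (Or2 X Y :: G) ->
    der (X :: G) Z -> der (Y :: G) Z -> der D Z
| d_Rorl : forall G X Y, der G X -> der G (Or2 X Y)
| d_Rorr : forall G X Y, der G Y -> der G (Or2 X Y)
| d_Lmimp : forall A B G D Z, Permutation D (MImp A B :: G) ->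
    der (MImp A B :: G) (emb A) -> der (emb B :: G) Z -> der D Z
| d_Rmimp : forall A B G, der (emb A :: G) (emb B) -> der G (MImp A B)
| d_LRsimp : forall A B C E G D, Permutation D (SImp C E :: G) ->
    der [MImp C E; emb A] (emb B) -> der D (SImp A B)
| d_Rsimp : forall A B G, der [emb A] (emb B) -> der G (SImp A B).

(* Main.v *)
Require Import Defs.
From Stdlib Require Import List Permutation Lia PeanoNat.
Import ListNotations.

Definition frm_eq_dec : forall x y : frm, {x = y} + {x <> y}.
Proof. decide equality; apply Nat.eq_dec. Qed.
Definition frm2_eq_dec : forall x y : frm2, {x = y} + {x <> y}.
Proof. decide equality; try apply frm_eq_dec; apply Nat.eq_dec. Qed.

Ltac count_prep y :=
  repeat match goal with H: Permutation _ _ |- _ =>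
    let h := fresh "h" in pose proof (proj1 (Permutation_count_occ frm2_eq_dec _ _) H y) as h; clear H end;
  do 3 (repeat rewrite count_occ_app in *; simpl count_occ in * );
  repeat match goal with
   | |- context [frm2_eq_dec ?a ?b] => destruct (frm2_eq_dec a b)
   | H: context [frm2_eq_dec ?a ?b] |- _ => destruct (frm2_eq_dec a b) end;
  first [lia | congruence].

Ltac perm_solve := apply (Permutation_count_occ frm2_eq_dec);
  let y := fresh "y" in intro y; count_prep y.
Ltac in_solve := match goal with |- In ?a ?l =>
  apply (count_occ_In frm2_eq_dec); count_prep a end.

Lemma perm_cons_split (a b : frm2) l m : Permutation (a::l) (b::m) ->
  (a = b /\ Permutation l m) \/ exists k, Permutation l (b::k) /\ Permutation m (a::k).
Proof.
  intros H. assert (Hin: In b (a::l)).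
  { apply (Permutation_in b (Permutation_sym H)); left; auto. }
  destruct Hin as [<-|Hin].
  - left; split; auto; eapply Permutation_cons_inv; eauto.
  - right. apply in_split in Hin as [l1 [l2 ->]]. exists (l1++l2). split; perm_solve.
Qed.

Lemma perm_cons2_split (P A : frm2) G0 G : Permutation (P::G0) (A::A::G) ->
  (P = A /\ Permutation G0 (A::G)) \/
  exists k, Permutation G (P::k) /\ Permutation G0 (A::A::k).
Proof.
  intros H. destruct (perm_cons_split _ _ _ _ H) as [[e Hq]|[k [H1 H2]]].
  - left; auto.
  - destruct (perm_cons_split _ _ _ _ H2) as [[e Hq]|[k' [H3 H4]]].
    + subst. left; split; auto. perm_solve.
    + right. exists k'. split; [exact H3| perm_solve].
Qed.

Lemma der_perm : forall G Z, der G Z -> forall G', Permutation G G' -> der G' Z.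
Proof.
  induction 1; intros G' Hp.
  - apply d_id with G. eapply Permutation_trans; [apply Permutation_sym; exact Hp| eassumption].
  - apply d_Lbot with G. eapply Permutation_trans; [apply Permutation_sym; exact Hp| eassumption].
  - apply d_Land with X Y G; [|eassumption]. eapply Permutation_trans; [apply Permutation_sym; exact Hp| eassumption].
  - apply d_Rand; auto.
  - apply d_Lor with X Y G; [|eassumption|eassumption]. eapply Permutation_trans; [apply Permutation_sym; exact Hp| eassumption].
  - apply d_Rorl; auto.
  - apply d_Rorr; auto.
  - apply d_Lmimp with A B G; [|eassumption|eassumption]. eapply Permutation_trans; [apply Permutation_sym; exact Hp| eassumption].
  - apply d_Rmimp; apply IHder; auto.
  - apply d_LRsimp with C E G; [|eassumption]. eapply Permutation_trans; [apply Permutation_sym; exact Hp| eassumption].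
  - apply d_Rsimp; auto.
Qed.

Lemma wk : forall G Z, der G Z -> forall W, der (W::G) Z.
Proof.
  induction 1; intros W.
  - apply d_id with (W::G). perm_solve.
  - apply d_Lbot with (W::G). perm_solve.
  - apply d_Land with X Y (W::G); [perm_solve|]. eapply der_perm; [apply (IHder W)|perm_solve].
  - apply d_Rand; auto.
  - apply d_Lor with X Y (W::G); [perm_solve| |].
    eapply der_perm; [apply (IHder1 W)|perm_solve].
    eapply der_perm; [apply (IHder2 W)|perm_solve].
  - apply d_Rorl; auto.
  - apply d_Rorr; auto.
  - apply d_Lmimp with A B (W::G); [perm_solve| |].
    eapply der_perm; [apply (IHder1 W)|perm_solve].
    eapply der_perm; [apply (IHder2 W)|perm_solve].
  - apply d_Rmimp. eapply der_perm; [apply (IHder W)|perm_solve].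
  - apply d_LRsimp with C E (W::G); [perm_solve|assumption].
  - apply d_Rsimp; auto.
Qed.

Lemma wk_app : forall G Z, der G Z -> forall L, der (L++G) Z.
Proof. intros G Z H L; induction L; simpl; auto using wk. Qed.

Lemma wk_app_r : forall G Z, der G Z -> forall L, der (G++L) Z.
Proof. intros. eapply der_perm; [apply (wk_app _ _ H L)|perm_solve]. Qed.

Lemma id_in : forall p G, In (Atom p) G -> der G (Atom p).
Proof. intros p G H; apply in_split in H as [l1 [l2 ->]]. apply d_id with (l1++l2); perm_solve. Qed.
Lemma bot_in : forall G Z, In Bot G -> der G Z.
Proof. intros G Z H; apply in_split in H as [l1 [l2 ->]]. apply d_Lbot with (l1++l2); perm_solve. Qed.
Lemma lrsimp_in : forall A B C E G, In (SImp C E) G -> der [MImp C E; emb A] (emb B) -> der G (SImp A B).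
Proof. intros A B C E G H Hd; apply in_split in H as [l1 [l2 ->]]. apply d_LRsimp with C E (l1++l2); [perm_solve|exact Hd]. Qed.

Definition repl (P : frm2) : list (list frm2) :=
  match P with
  | And2 X Y => [[X;Y]]
  | Or2 X Y => [[X];[Y]]
  | MImp A B => [[emb B]]
  | _ => []
  end.

Lemma inv_gen : forall H Z, der H Z -> forall P G Q,
  Permutation H (P::G) -> In Q (repl P) -> der (Q++G) Z.
Proof.
  induction 1 as [p G0 D0 HP | G0 D0 Z0 HP | X Y G0 D0 Z0 HP Hd IH | G0 X Y Hd1 IH1 Hd2 IH2
    | X Y G0 D0 Z0 HP Hd1 IH1 Hd2 IH2 | G0 X Y Hd IH | G0 X Y Hd IH
    | A B G0 D0 Z0 HP Hd1 IH1 Hd2 IH2 | A B G0 Hd IH | A B C E G0 D0 HP Hd IH | A B G0 Hd IH];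
    intros P G1 Q Hp HQ.
  - destruct (frm2_eq_dec P (Atom p)) as [->|ne]; [simpl in HQ; contradiction|].
    apply id_in; in_solve.
  - destruct (frm2_eq_dec P Bot) as [->|ne]; [simpl in HQ; contradiction|].
    apply bot_in; in_solve.
  - destruct (perm_cons_split _ _ _ _ (Permutation_trans (Permutation_sym HP) Hp)) as [[e Hq]|[k [H1 H2]]].
    + subst P. simpl in HQ. destruct HQ as [<-|[]]. eapply der_perm; [exact Hd|perm_solve].
    + apply d_Land with X Y (Q++k); [perm_solve|].
      eapply der_perm; [apply (IH P (X::Y::k) Q); [perm_solve|exact HQ]|perm_solve].
  - apply d_Rand; eauto.
  - destruct (perm_cons_split _ _ _ _ (Permutation_trans (Permutation_sym HP) Hp)) as [[e Hq]|[k [H1 H2]]].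
    + subst P. simpl in HQ. destruct HQ as [<-|[<-|[]]].
      * eapply der_perm; [exact Hd1|perm_solve].
      * eapply der_perm; [exact Hd2|perm_solve].
    + apply d_Lor with X Y (Q++k); [perm_solve| |].
      eapply der_perm; [apply (IH1 P (X::k) Q); [perm_solve|exact HQ]|perm_solve].
      eapply der_perm; [apply (IH2 P (Y::k) Q); [perm_solve|exact HQ]|perm_solve].
  - apply d_Rorl; eauto.
  - apply d_Rorr; eauto.
  - destruct (perm_cons_split _ _ _ _ (Permutation_trans (Permutation_sym HP) Hp)) as [[e Hq]|[k [H1 H2]]].
    + subst P. simpl in HQ. destruct HQ as [<-|[]]. eapply der_perm; [exact Hd2|perm_solve].
    + apply d_Lmimp with A B (Q++k); [perm_solve| |].
      eapply der_perm; [apply (IH1 P (MImp A B::k) Q); [perm_solve|exact HQ]|perm_solve].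
      eapply der_perm; [apply (IH2 P (emb B::k) Q); [perm_solve|exact HQ]|perm_solve].
  - apply d_Rmimp.
    eapply der_perm; [apply (IH P (emb A::G1) Q); [perm_solve|exact HQ]|perm_solve].
  - destruct (frm2_eq_dec P (SImp C E)) as [->|ne]; [simpl in HQ; contradiction|].
    apply lrsimp_in with C E; [in_solve|exact Hd].
  - apply d_Rsimp; exact Hd.
Qed.

Lemma inv_and : forall H Z X Y G, der H Z -> Permutation H (And2 X Y :: G) -> der (X::Y::G) Z.
Proof. intros. apply (inv_gen _ _ H0 (And2 X Y) G [X;Y] H1). left; reflexivity. Qed.
Lemma inv_or1 : forall H Z X Y G, der H Z -> Permutation H (Or2 X Y :: G) -> der (X::G) Z.
Proof. intros. apply (inv_gen _ _ H0 (Or2 X Y) G [X] H1). left; reflexivity. Qed.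
Lemma inv_or2 : forall H Z X Y G, der H Z -> Permutation H (Or2 X Y :: G) -> der (Y::G) Z.
Proof. intros. apply (inv_gen _ _ H0 (Or2 X Y) G [Y] H1). right; left; reflexivity. Qed.
Lemma inv_mimp : forall H Z A B G, der H Z -> Permutation H (MImp A B :: G) -> der (emb B::G) Z.
Proof. intros. apply (inv_gen _ _ H0 (MImp A B) G [emb B] H1). left; reflexivity. Qed.

Fixpoint fw (A : frm) : nat :=
  match A with
  | FAtom _ | FBot => 1
  | FAnd A B | FOr A B => fw A + fw B + 1
  | FImp A B => fw A + fw B + 2
  end.
Fixpoint w (X : frm2) : nat :=
  match X with
  | Atom _ | Bot => 1
  | SImp A B => fw A + fw B + 2
  | MImp A B => fw A + fw B + 1
  | And2 X Y | Or2 X Y => w X + w Y + 1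
  end.
Lemma w_emb : forall A, w (emb A) = fw A.
Proof. induction A; simpl; auto. Qed.
Lemma w_pos : forall X, 0 < w X.
Proof. destruct X; simpl; lia. Qed.

Lemma contr_gen : forall n A, w A < n -> forall H Z, der H Z -> forall G,
  Permutation H (A::A::G) -> der (A::G) Z.
Proof.
  induction n as [|n IHn]; intros A Hw; [pose proof (w_pos A); lia|].
  intros H Z Hd.
  induction Hd as [p G0 D0 HP | G0 D0 Z0 HP | X Y G0 D0 Z0 HP Hd IH | G0 X Y Hd1 IH1 Hd2 IH2
    | X Y G0 D0 Z0 HP Hd1 IH1 Hd2 IH2 | G0 X Y Hd IH | G0 X Y Hd IH
    | A' B' G0 D0 Z0 HP Hd1 IH1 Hd2 IH2 | A' B' G0 Hd IH | A' B' C E G0 D0 HP Hd IH | A' B' G0 Hd IH];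
    intros G1 Hp.
  - apply id_in; in_solve.
  - apply bot_in; in_solve.
  - destruct (perm_cons2_split _ _ _ _ (Permutation_trans (Permutation_sym HP) Hp)) as [[e Hq]|[k [H1 H2]]].
    + subst A. simpl in Hw. apply d_Land with X Y G1; [apply Permutation_refl|].
      assert (h1 : der (X::Y::X::Y::G1) Z0) by (apply (inv_and _ _ _ _ _ Hd); perm_solve).
      assert (h2 : der (X::Y::Y::G1) Z0) by (apply (IHn X ltac:(lia) _ _ h1); perm_solve).
      assert (h3 : der (Y::X::G1) Z0) by (apply (IHn Y ltac:(lia) _ _ h2); perm_solve).
      eapply der_perm; [exact h3|perm_solve].
    + apply d_Land with X Y (A::k); [perm_solve|].
      eapply der_perm; [apply (IH (X::Y::k)); perm_solve|perm_solve].
  - apply d_Rand; auto.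
  - destruct (perm_cons2_split _ _ _ _ (Permutation_trans (Permutation_sym HP) Hp)) as [[e Hq]|[k [H1 H2]]].
    + subst A. simpl in Hw. apply d_Lor with X Y G1; [apply Permutation_refl| |].
      * assert (h1 : der (X::X::G1) Z0) by (apply (inv_or1 _ _ _ Y _ Hd1); perm_solve).
        apply (IHn X ltac:(lia) _ _ h1); perm_solve.
      * assert (h1 : der (Y::Y::G1) Z0) by (apply (inv_or2 _ _ X _ _ Hd2); perm_solve).
        apply (IHn Y ltac:(lia) _ _ h1); perm_solve.
    + apply d_Lor with X Y (A::k); [perm_solve| |].
      eapply der_perm; [apply (IH1 (X::k)); perm_solve|perm_solve].
      eapply der_perm; [apply (IH2 (Y::k)); perm_solve|perm_solve].
  - apply d_Rorl; auto.
  - apply d_Rorr; auto.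
  - destruct (perm_cons2_split _ _ _ _ (Permutation_trans (Permutation_sym HP) Hp)) as [[e Hq]|[k [H1 H2]]].
    + subst A. simpl in Hw. apply d_Lmimp with A' B' G1; [apply Permutation_refl| |].
      * apply IH1; perm_solve.
      * assert (h1 : der (emb B'::emb B'::G1) Z0) by (apply (inv_mimp _ _ A' _ _ Hd2); perm_solve).
        apply (IHn (emb B') ltac:(rewrite w_emb; lia) _ _ h1); perm_solve.
    + apply d_Lmimp with A' B' (A::k); [perm_solve| |].
      eapply der_perm; [apply (IH1 (MImp A' B'::k)); perm_solve|perm_solve].
      eapply der_perm; [apply (IH2 (emb B'::k)); perm_solve|perm_solve].
  - apply d_Rmimp. eapply der_perm; [apply (IH (emb A'::G1)); perm_solve|perm_solve].
  - apply lrsimp_in with C E; [in_solve|exact Hd].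
  - apply d_Rsimp; exact Hd.
Qed.

Lemma contraction : forall A G Z, der (A::A::G) Z -> der (A::G) Z.
Proof. intros. apply (contr_gen (S (w A)) A ltac:(lia) _ _ H). apply Permutation_refl. Qed.

Lemma contr_list : forall L M Z, der (L++L++M) Z -> der (L++M) Z.
Proof.
  induction L as [|a L IH]; intros M Z H; simpl in *; auto.
  assert (h : der (L ++ a::a::M) Z) by (apply IH; eapply der_perm; [exact H|perm_solve]).
  apply contraction. eapply der_perm; [exact h|perm_solve].
Qed.

Lemma cut_right : forall D G,
  (forall q, D <> Atom q) -> D <> Bot ->
  (forall X Y G' Z, D = And2 X Y -> der (X::Y::G') Z -> der (G++G') Z) ->
  (forall X Y G' Z, D = Or2 X Y -> der (X::G') Z -> der (Y::G') Z -> der (G++G') Z) ->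
  (forall A B G' Z, D = MImp A B -> der (G++G') (emb A) -> der (emb B :: G') Z -> der (G++G') Z) ->
  (forall A B C E G', D = SImp C E -> der [MImp C E; emb A] (emb B) -> der (G++G') (SImp A B)) ->
  forall H Z, der H Z -> forall G', Permutation H (D::G') -> der (G++G') Z.
Proof.
  intros D G Hna Hnb Hand Hor Hmimp Hsimp H Z Hd.
  induction Hd as [p G0 D0 HP | G0 D0 Z0 HP | X Y G0 D0 Z0 HP Hd IH | G0 X Y Hd1 IH1 Hd2 IH2
    | X Y G0 D0 Z0 HP Hd1 IH1 Hd2 IH2 | G0 X Y Hd IH | G0 X Y Hd IH
    | A B G0 D0 Z0 HP Hd1 IH1 Hd2 IH2 | A B G0 Hd IH | A B C E G0 D0 HP Hd IH | A B G0 Hd IH];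
    intros G1 Hp.
  - specialize (Hna p). apply id_in; in_solve.
  - apply bot_in; in_solve.
  - destruct (perm_cons_split _ _ _ _ (Permutation_trans (Permutation_sym HP) Hp)) as [[e Hq]|[k [H1 H2]]].
    + apply Hand with X Y; [congruence|]. eapply der_perm; [exact Hd|perm_solve].
    + apply d_Land with X Y (G++k); [perm_solve|].
      eapply der_perm; [apply (IH (X::Y::k)); perm_solve|perm_solve].
  - apply d_Rand; auto.
  - destruct (perm_cons_split _ _ _ _ (Permutation_trans (Permutation_sym HP) Hp)) as [[e Hq]|[k [H1 H2]]].
    + apply Hor with X Y; [congruence| |].
      eapply der_perm; [exact Hd1|perm_solve].
      eapply der_perm; [exact Hd2|perm_solve].
    + apply d_Lor with X Y (G++k); [perm_solve| |].
      eapply der_perm; [apply (IH1 (X::k)); perm_solve|perm_solve].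
      eapply der_perm; [apply (IH2 (Y::k)); perm_solve|perm_solve].
  - apply d_Rorl; auto.
  - apply d_Rorr; auto.
  - destruct (perm_cons_split _ _ _ _ (Permutation_trans (Permutation_sym HP) Hp)) as [[e Hq]|[k [H1 H2]]].
    + subst D. apply Hmimp with A B; [reflexivity| |].
      apply IH1; perm_solve.
      eapply der_perm; [exact Hd2|perm_solve].
    + apply d_Lmimp with A B (G++k); [perm_solve| |].
      eapply der_perm; [apply (IH1 (MImp A B::k)); perm_solve|perm_solve].
      eapply der_perm; [apply (IH2 (emb B::k)); perm_solve|perm_solve].
  - apply d_Rmimp. eapply der_perm; [apply (IH (emb A::G1)); perm_solve|perm_solve].
  - destruct (perm_cons_split _ _ _ _ (Permutation_trans (Permutation_sym HP) Hp)) as [[e Hq]|[k [H1 H2]]].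
    + apply Hsimp with C E; [congruence|exact Hd].
    + apply lrsimp_in with C E; [in_solve|exact Hd].
  - apply d_Rsimp; exact Hd.
Qed.

Lemma cut_main : forall n G D, der G D -> w D < n ->
  forall H Z G', der H Z -> Permutation H (D::G') -> der (G++G') Z.
Proof.
  induction n as [|n IHn]; intros G D Hl; [intros Hw; pose proof (w_pos D); lia|].
  induction Hl as [p G0 D0 HP | G0 D0 Z0 HP | X Y G0 D0 Z0 HP Hd IH | G0 X Y Hd1 IH1 Hd2 IH2
    | X Y G0 D0 Z0 HP Hd1 IH1 Hd2 IH2 | G0 X Y Hd IH | G0 X Y Hd IH
    | A B G0 D0 Z0 HP Hd1 IH1 Hd2 IH2 | A B G0 Hd IH | A B C E G0 D0 HP Hd IH | A B G0 Hd IH];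
    intros Hw H Z G' Hr Hp.
  - eapply der_perm; [apply (wk_app _ _ Hr G0)|perm_solve].
  - apply d_Lbot with (G0++G'); perm_solve.
  - apply d_Land with X Y (G0++G'); [perm_solve|]. exact (IH Hw H Z G' Hr Hp).
  - simpl in Hw.
    refine (cut_right (And2 X Y) G0 _ _ _ _ _ _ H Z Hr G' Hp);
      try (intros; discriminate).
    intros X' Y' G'' Z' e HXY. injection e as <- <-.
    pose proof (IHn G0 X Hd1 ltac:(lia) (X::Y::G'') Z' (Y::G'') HXY (Permutation_refl _)) as h1.
    assert (h2 : der (G0 ++ G0 ++ G'') Z').
    { apply (IHn G0 Y Hd2 ltac:(lia) (G0++Y::G'') Z' (G0++G'') h1). perm_solve. }
    apply contr_list; exact h2.
  - apply d_Lor with X Y (G0++G'); [perm_solve| |].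
    exact (IH1 Hw H Z G' Hr Hp). exact (IH2 Hw H Z G' Hr Hp).
  - simpl in Hw.
    refine (cut_right (Or2 X Y) G0 _ _ _ _ _ _ H Z Hr G' Hp);
      try (intros; discriminate).
    intros X' Y' G'' Z' e HX HY. injection e as <- <-.
    exact (IHn G0 X Hd ltac:(lia) (X::G'') Z' G'' HX (Permutation_refl _)).
  - simpl in Hw.
    refine (cut_right (Or2 X Y) G0 _ _ _ _ _ _ H Z Hr G' Hp);
      try (intros; discriminate).
    intros X' Y' G'' Z' e HX HY. injection e as <- <-.
    exact (IHn G0 Y Hd ltac:(lia) (Y::G'') Z' G'' HY (Permutation_refl _)).
  - apply d_Lmimp with A B (G0++G'); [perm_solve| |].
    exact (wk_app_r _ _ Hd1 G'). exact (IH2 Hw H Z G' Hr Hp).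
  - simpl in Hw.
    refine (cut_right (MImp A B) G0 _ _ _ _ _ _ H Z Hr G' Hp);
      try (intros; discriminate).
    intros A' B' G'' Z' e HA HB. injection e as <- <-.
    pose proof (IHn (G0++G'') (emb A) HA ltac:(rewrite w_emb; lia) (emb A::G0) (emb B) G0 Hd (Permutation_refl _)) as h1.
    pose proof (IHn _ (emb B) h1 ltac:(rewrite w_emb; lia) (emb B::G'') Z' G'' HB (Permutation_refl _)) as h2.
    assert (h3 : der ((G0++G'') ++ (G0++G'') ++ []) Z') by (eapply der_perm; [exact h2|perm_solve]).
    apply contr_list in h3. rewrite app_nil_r in h3. exact h3.
  - simpl in Hw.
    refine (cut_right (SImp A B) D0 _ _ _ _ _ _ H Z Hr G' Hp);
      try (intros; discriminate).
    intros A' B' C' E' G'' e HXY. injection e as <- <-.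
    assert (hm : der [MImp C E] (MImp A B)).
    { apply d_Rmimp. eapply der_perm; [exact Hd|apply perm_swap]. }
    pose proof (IHn [MImp C E] (MImp A B) hm ltac:(simpl; lia) _ (emb B') [emb A'] HXY (Permutation_refl _)) as h.
    apply d_LRsimp with C E (G0++G''); [perm_solve|exact h].
  - simpl in Hw.
    refine (cut_right (SImp A B) G0 _ _ _ _ _ _ H Z Hr G' Hp);
      try (intros; discriminate).
    intros A' B' C' E' G'' e HXY. injection e as <- <-.
    pose proof (IHn [] (MImp A B) (d_Rmimp A B [] Hd) ltac:(simpl; lia) _ (emb B') [emb A'] HXY (Permutation_refl _)) as h.
    apply d_Rsimp; exact h.
Qed.

Theorem theorem5p3 : forall (D Z : frm2) (G G' : list frm2),
  der G D -> der (D :: G') Z -> der (G ++ G') Z.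
Proof.
  intros D Z G G' H1 H2.
  exact (cut_main (S (w D)) G D H1 (Nat.lt_succ_diag_r _) (D::G') Z G' H2 (Permutation_refl _)).
Qed.
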